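(* Let $p,q\ge 1$ be coprime integers, $n=p+q$, and let $\mathsf{T}_c$ be the lower Christoffel word of length $n$ determined by $p$ and $q$. Then $\mathsf{SA}_{\mathsf{T}_c}$ is the arithmetically progressed permutation with first entry $\mathsf{SA}_{\mathsf{T}_c}[1]=1$ and ratio $k=q^{-1}$, the multiplicative inverse of $q$ modulo $n$. Equivalently, $\mathsf{T}_c$ equals the binary string $\mathsf{T}$ defined by $\mathsf{T}[i]=\mathtt{a}$ if $i\in\{P[1],\ldots,P[s]\}$ and $\mathtt{b}$ otherwise, where $P$ is that permutation and $s$ is the index with $P[s]=n-k$.
   Context: Alphabet $\{\mathtt{a}<\mathtt{b}\}$; lexicographic order with a proper prefix smaller than the longer string; suffix array $\mathsf{SA}_{\mathsf{T}}$: permutation of $[1..n]$ such that $\mathsf{T}[\mathsf{SA}_{\mathsf{T}}[i]..n]$ is the $i$-th smallest suffix. $x\bmod n$ denotes the representative of $x$ modulo $n$ in $[1..n]$; $x\operatorname{mod}_0 n$ denotes the representative in $[0..n-1]$. An arithmetically progressed permutation of length $n$ with ratio $k\in[1..n-1]$ is a permutation $P$ of $[1..n]$ with $P[i+1]=P[i]+k\bmod n$. Lower Christoffel word determined by coprime $p,q\ge1$: the string $\mathsf{T}_c$ of length $n=p+q$ with, for $i\in[1..n]$, $\mathsf{T}_c[i]=\mathtt{a}$ if $(i-1)q\operatorname{mod}_0 n< iq\operatorname{mod}_0 n$ and $\mathsf{T}_c[i]=\mathtt{b}$ otherwise. (Geometrically, this is the lattice path from $(0,0)$ to $(p,q)$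 with $\mathtt{a}$ = unit step right and $\mathtt{b}$ = unit step up, lying below the segment from $(0,0)$ to $(p,q)$ and enclosing with it no lattice points.) *)

(* Defs.v *)
From mathcomp Require Import all_boot.
Set Implicit Arguments. Unset Strict Implicit. Unset Printing Implicit Defensive.

Definition la : bool := false.
Definition lb : bool := true.

Definition letter_lt (x y : bool) : bool := (x == la) && (y == lb).

Fixpoint lex_lt (s t : seq bool) : bool :=
  match s, t with
  | [::], [::] => false
  | [::], _ :: _ => true
  | _ :: _, [::] => false
  | x :: s', y :: t' => letter_lt x y || ((x == y) && lex_lt s' t')
  end.

(* 1-indexed access T[i], and suffix T[i..n] *)
Definition letter_at (T : seq bool) (i : nat) : bool := nth la T i.-1.
Definition suffix (T : seq bool) (i : nat) : seq bool := drop i.-1 T.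

(* SA : nat -> nat (values at 1..n used) is the suffix array of T (n = size T):
   a permutation of [1..n] such that T[SA i..n] is the i-th smallest suffix. *)
Definition is_suffix_array (T : seq bool) (SA : nat -> nat) : Prop :=
  let n := size T in
  (forall i, 1 <= i <= n -> 1 <= SA i <= n) /\
  (forall i j, 1 <= i <= n -> 1 <= j <= n -> SA i = SA j -> i = j) /\
  (forall i, 1 <= i < n -> lex_lt (suffix T (SA i)) (suffix T (SA i.+1))).

(* x mod n, representative in [1..n] *)
Definition mod1 (x n : nat) : nat := (x + n).-1 %% n + 1.

(* The arithmetic progression P with P[1] = first and P[i+1] = P[i] + k mod n
   (1-indexed; P i for i >= 1). *)
Definition ap_seq (n k first : nat) (i : nat) : nat :=
  iter i.-1 (fun x => mod1 (x + k) n) first.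

Definition christoffel (p q : nat) : seq bool :=
  let n := p + q in
  mkseq (fun j => if ((j * q) %% n < (j.+1 * q) %% n) then la else lb) n.

(* Main.v *)
Require Import Defs.
From mathcomp Require Import all_boot zify.

Lemma mod_wrap n a : n <= a -> a < n + n -> a %% n = a - n.
Proof. move=> h1 h2. rewrite -{1}(subnK h1) modnDr modn_small //. lia. Qed.

Lemma stepmod n q v : (v.+1 * q) %% n = ((v*q)%%n + q) %% n.
Proof. by rewrite mulSn addnC modnDml. Qed.

Lemma letterT p q u : 0 < p -> 0 < q -> u < p+q ->
  nth la (christoffel p q) u = (p+q <= (u*q)%%(p+q) + q).
Proof.
move=> hp hq h; rewrite /christoffel nth_mkseq // stepmod.
have hy: (u*q)%%(p+q) < p+q by rewrite ltn_mod; lia.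
move: hy; set y := (u*q)%%(p+q) => hy.
case: (ltnP (y+q) (p+q)) => c.
- rewrite modn_small // ifT; last lia. by apply/esym/negbTE; lia.
- rewrite mod_wrap //; last lia. rewrite ifF; last by apply/negbTE; rewrite -leqNgt; lia. by rewrite /lb; apply/esym/idP; lia.
Qed.

Lemma iterP n k t : 0 < n -> iter t (fun x => mod1 (x + k) n) 1 = (t*k)%%n + 1.
Proof.
move=> hn; elim: t => [|t IH] /=; first by rewrite mod0n.
rewrite IH /mod1.
have -> : ((t * k %% n + 1 + k + n).-1) = t*k %%n + k + n by rewrite addn1 !addSn.

rewrite modnDr modnDml mulSn. by rewrite [k + _]addnC.
Qed.
Lemma lex_pref s t m : (forall j, j < m -> nth la s j = nth la t j) -> m < size t ->
  (m = size s \/ (m < size s /\ nth la s m = la /\ nth la t m = lb)) -> lex_lt s t.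
Proof.
elim: s t m => [|x s IH] [|y t] m //=.
move=> hpre hm hc; case: m hpre hm hc => [|m] hpre hm hc.
- case: hc => [//|[_ [/= -> ->]]]. by [].
- have /= exy := hpre 0 isT. rewrite exy eqxx.
  apply/orP; right; apply: (IH t m).
  + by move=> j hj; apply: (hpre j.+1).
  + by [].
  + case: hc => [[->]|[h1 h2]]; [by left|by right].
Qed.

Lemma resP n q k j : 0 < n -> (k*q) %% n = 1 -> 1 <= j <= n ->
  ((((j.-1*k) %% n + 1).-1) * q) %% n = j.-1.
Proof.
move=> hn hkq hj. rewrite addn1 /= modnMml -mulnA -modnMmr hkq muln1 modn_small //; lia.
Qed.

Lemma Pres n q k u : (k*q) %% n = 1 -> u < n ->
  ((((u*q) %% n).+1).-1 * k) %% n + 1 = u.+1.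
Proof.
move=> hkq hu /=. rewrite modnMml -mulnA [q*k]mulnC -modnMmr hkq muln1 modn_small //; lia.
Qed.

Lemma order_lem p q u u' : 0 < p -> 0 < q -> u < p+q -> u' < p+q ->
  (u'*q) %% (p+q) = (u*q) %% (p+q) + 1 ->
  lex_lt (drop u (christoffel p q)) (drop u' (christoffel p q)).
Proof.
move=> hp hq hu hu' hr.
set n := p + q. set T := christoffel p q.
have hn : 0 < n by rewrite /n; lia.
have sT : size T = n by rewrite /T /christoffel size_mkseq.
pose Q m := ~~ [&& u+m<n, u'+m<n & nth la T (u+m) == nth la T (u'+m)].
have ex : exists m, Q m.
  exists (n-u'); rewrite /Q; apply/negP => /and3P [_ h _]; lia.
case: (ex_minnP ex) => m Qm minm.
have good : forall j, j < m -> [&& u+j<n, u'+j<n & nth la T (u+j) == nth la T (u'+j)].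
  move=> j hj; apply/negPn/negP => /minm; lia.
have inv : forall j, j <= m -> ((u'+j)*q) %% n = ((u+j)*q) %% n + 1.
  elim => [|j IH] hj; first by rewrite !addn0.
  have /and3P [h1 h2 /eqP h3] := good j hj.
  rewrite !addnS !stepmod IH; last lia.
  rewrite /T !letterT // IH in h3; last lia.
  have hy : ((u+j)*q) %% n < n by rewrite ltn_mod.
  move: hy h3 h2 h1; rewrite -/n.
  set y := ((u+j)*q) %% n => hy h3 h2 h1.
  have hy1 : y + 1 < n.
    have : ((u'+j)*q) %% n < n by rewrite ltn_mod.
    by rewrite IH; lia.
  have h3' : (n <= y+1+q) <-> (n <= y+q) by rewrite h3.
  case: (ltnP (y+q) n) => c.
  + rewrite !modn_small //; lia.
  + rewrite !mod_wrap //; lia.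
have invm := inv m (leqnn m).
case: (ltnP (u'+m) n) => hB.
- case: (ltnP (u+m) n) => hA.
  + rewrite /Q hA hB /= in Qm.
    apply: (@lex_pref _ _ m).
    * move=> j hj; rewrite !nth_drop; by have /and3P [_ _ /eqP] := good j hj.
    * rewrite size_drop sT; lia.
    * right; rewrite size_drop sT !nth_drop; split; first lia.
      rewrite /T !letterT // invm in Qm *.
      have hy : ((u+m)*q) %% n < n by rewrite ltn_mod.
      move: hy Qm; rewrite -/n.
      set y := ((u+m)*q) %% n => hy Qm.
      case: (ltnP (y+q) n) => c.
      -- have c2 : n <= y + 1 + q.
           case: (ltnP (y+1+q) n) => // c2.
           have e1 : (n <= y+q) = false by apply/negbTE; rewrite -ltnNge.
           have e2 : (n <= y+1+q) = false by apply/negbTE; rewrite -ltnNge.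
           by move: Qm; rewrite e1 e2.
         by split.
      -- have c2 : n <= y + 1 + q by lia.
         by move: Qm; rewrite c c2.
  + have hm : 0 < m by lia.
    have /and3P [h1 h2 _] := good m.-1 (ltac:(clear -hm; lia)).
    apply: (@lex_pref _ _ m).
    * move=> j hj; rewrite !nth_drop; by have /and3P [_ _ /eqP] := good j hj.
    * rewrite size_drop sT; lia.
    * left; rewrite size_drop sT; lia.
- have hm : 0 < m by lia.
  have /and3P [h1 h2 _] := good m.-1 (ltac:(clear -hm; lia)).
  have e : u' + m = n by lia.
  by move: invm; rewrite e modnMr addn1.
Qed.

Theorem theorem12 (p q : nat) :
  1 <= p -> 1 <= q -> coprime p q ->
  forall k : nat, 1 <= k <= (p + q).-1 -> (k * q) %% (p + q) = 1 ->
  let n := p + q in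
  let P := ap_seq n k 1 in
  is_suffix_array (christoffel p q) P /\
  (forall s : nat, 1 <= s <= n -> P s = n - k ->
     forall i : nat, 1 <= i <= n ->
       letter_at (christoffel p q) i =
       (if i \in [seq P j | j <- iota 1 s] then la else lb)).
Proof.
move=> hp hq _ k hk hkq n P.
have hn : 0 < n by rewrite /n; lia.
have HP : forall j, P j = (j.-1*k) %% n + 1 by move=> j; rewrite /P /ap_seq iterP.
have sT : size (christoffel p q) = n by rewrite /christoffel size_mkseq.
have rP : forall j, 1 <= j <= n -> ((P j).-1 * q) %% n = j.-1.
  by move=> j hj; rewrite HP; apply: resP.
have PR : forall u, u < n -> P ((u*q) %% n).+1 = u.+1.
  by move=> u hu; rewrite HP; apply: Pres.
have Pb : forall j, 1 <= P j <= n.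
  move=> j; rewrite HP; have := ltn_mod (j.-1*k) n; rewrite hn; lia.
split.
- rewrite /is_suffix_array sT; split; last split.
  + by move=> i _.
  + move=> i j hi hj e; have := rP i hi; rewrite e rP //; lia.
  + move=> i hi; rewrite /suffix; apply: order_lem => //.
    * have := Pb i; rewrite -/n; lia.
    * have := Pb i.+1; rewrite -/n; lia.
    * rewrite -/n !rP //; lia.
- move=> s hs hPs.
  have sp : s = p.
    have e : (n-k).-1*q + k*q + q = n*q by rewrite -[X in _ + X = _]mul1n -!mulnDl; congr (_ * _); rewrite /n; lia.
    have := rP s hs; rewrite hPs.
    have hr : ((n-k).-1*q) %% n < n by rewrite ltn_mod.
    move: hr; set r := ((n-k).-1*q) %% n => hr er.
    have E : (r + 1 + q) %% n = 0.
      by rewrite -hkq /r -modnDml modnDm modnDml e modnMr.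
    have : 0 < r + 1 + q by lia.
    have : r + 1 + q < n + n by rewrite /n; lia.
    move: E; case: (ltnP (r+1+q) n) => c.
    * rewrite modn_small //; lia.
    * rewrite mod_wrap //; rewrite /n; lia.
  subst s.
  move=> i hi; rewrite /letter_at letterT //; last lia.
  rewrite -/n.
  have hy : ((i.-1*q) %% n) < n by rewrite ltn_mod.
  move: hy; set y := (i.-1*q) %% n => hy.
  case: ifP => hin.
  + case/mapP: hin => j; rewrite mem_iota => hj ej.
    have := rP j ltac:(rewrite /n; lia); rewrite -ej -/y => ey.
    apply/negbTE; rewrite -ltnNge; rewrite /n; lia.
  + case: (ltnP (y+q) n) => c.
    * exfalso; move/negbT: hin; apply/negP/negPn/mapP.
      exists y.+1; first by rewrite mem_iota; rewrite /n in c; lia.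
      rewrite PR; last lia. lia.
    * by rewrite /lb; apply/esym/idP; move: c; rewrite /n; lia.
Qed.
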